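(* For all integers $m,n\ge 0$, $$\binom{m+n}{m}H_{n+m}=\sum_{k=0}^{n}H_k\binom{m+n-k-1}{n-k}+H_m\binom{n+m}{n},$$ where $H_j$ denotes the $j$-th harmonic number.
   Context: The harmonic numbers are $H_0=0$ and $H_j=1+\frac12+\cdots+\frac1j$ for $j\ge 1$. Binomial coefficients are the generalized ones: for any integer $a$ (possibly negative) and integer $j\ge 0$, $\binom{a}{j}=\frac{a(a-1)\cdots(a-j+1)}{j!}$, with $\binom{a}{0}=1$; in particular $\binom{-1}{0}=1$. *)

(* Defs.v *)
From mathcomp Require Import all_boot all_order all_algebra.
Set Implicit Arguments. Unset Strict Implicit. Unset Printing Implicit Defensive.
Import Order.TTheory GRing.Theory Num.Theory.
Local Open Scope ring_scope.

Definition harmonic (j : nat) : rat := \sum_(1 <= i < j.+1) (i%:R)^-1.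

Definition gbinom (a : int) (j : nat) : rat :=
  (\prod_(i < j) (a%:~R - (i : nat)%:R)) / (j`!)%:R.

(* Main.v *)
Require Import Defs.
From mathcomp Require Import all_boot all_order all_algebra.
From mathcomp Require Import ring lra zify.
Import Order.TTheory GRing.Theory Num.Theory.
Local Open Scope ring_scope.

Lemma harmonicS n : harmonic n.+1 = harmonic n + (n.+1%:R)^-1.
Proof. by rewrite /harmonic big_nat_recr. Qed.

Lemma harmonic0 : harmonic 0 = 0.
Proof. by rewrite /harmonic big_geq. Qed.

Lemma gbinom0 a : gbinom a 0 = 1.
Proof. by rewrite /gbinom big_ord0 divr1. Qed.

Lemma prod_ffact (a j : nat) :
  \prod_(i < j) ((a%:Z)%:~R - (i : nat)%:R : rat) = (a ^_ j)%:R.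
Proof.
elim: j => [|j IH]; first by rewrite big_ord0 ffactn0.
rewrite big_ord_recr /= IH ffactnSr natrM.
case: (leqP j a) => h; first by rewrite natrB.
by rewrite ffact_small // !mul0r.
Qed.

Lemma gbinom_nat (a j : nat) : gbinom a%:Z j = ('C(a, j))%:R.
Proof.
rewrite /gbinom prod_ffact -bin_ffact natrM mulfK //.
by rewrite pnatr_eq0 -lt0n fact_gt0.
Qed.

Definition S (m n : nat) : rat :=
  \sum_(0 <= k < n.+1) harmonic k * ('C((m + n - k).-1, n - k))%:R.

Definition T (m n : nat) : rat :=
  ('C(m + n, m))%:R * (harmonic (m + n) - harmonic m).

Lemma S0n n : S 0 n = harmonic n.
Proof.
rewrite /S big_nat_recr //= subnn bin0 mulr1 add0n big1_seq ?add0r //.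
move=> k; rewrite mem_index_iota => /andP [_ hk].
by rewrite bin_small ?mulr0 //; lia.
Qed.

Lemma Sm0 m : S m 0 = 0.
Proof. by rewrite /S big_nat1 harmonic0 mul0r. Qed.

Lemma S_pascal m n : S m.+1 n.+1 = S m.+1 n + S m n.+1.
Proof.
rewrite /S big_nat_recr //= [X in _ = _ + X]big_nat_recr //= !subnn !bin0 !mulr1.
rewrite addrA; congr (_ + _).
rewrite -big_split /=; apply: eq_big_nat => k /andP [_ hk].
rewrite -mulrDr -natrD; congr (_ * _%:R).
have -> : ((m.+1 + n.+1 - k).-1 = (m + n - k).+1)%N by lia.
have -> : (n.+1 - k = (n - k).+1)%N by lia.
rewrite binS addnC.
have -> : ((m.+1 + n - k).-1 = m + n - k)%N by lia.
by have -> : ((m + n.+1 - k).-1 = m + n - k)%N by lia.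
Qed.

Lemma T_pascal m n : T m.+1 n.+1 = T m.+1 n + T m n.+1.
Proof.
rewrite /T.
have e1 : (m.+1 + n.+1 = (m + n.+1).+1)%N by lia.
have e2 : (m.+1 + n = m + n.+1)%N by lia.
rewrite e1 e2 !harmonicS.
set N := (m + n.+1)%N.
have hd := mul_bin_diag N.+1 m. rewrite /= in hd.
rewrite binS.
have : (N.+1%:R * ('C(N, m))%:R = m.+1%:R * ('C(N.+1, m.+1))%:R :> rat)
  by rewrite -!natrM hd.
rewrite binS natrD.
move: (harmonic N) (harmonic m) ('C(N, m))%:R ('C(N, m.+1))%:R => hN hm a b E.
have h1 : (N.+1%:R : rat) != 0 by rewrite pnatr_eq0.
have h2 : (m.+1%:R : rat) != 0 by rewrite pnatr_eq0.
have Eb : b = N.+1%:R * a / m.+1%:R - a.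
  by rewrite E; field; rewrite ?nat1r ?pnatr_eq0.
by rewrite Eb; field; rewrite ?nat1r ?pnatr_eq0.
Qed.

Lemma ST m n : S m n = T m n.
Proof.
elim: m n => [|m IHm] n.
  by rewrite S0n /T add0n bin0 harmonic0 subr0 mul1r.
elim: n => [|n IHn].
  by rewrite Sm0 /T addn0 subrr mulr0.
by rewrite S_pascal T_pascal IHn IHm.
Qed.

Theorem theorem2p2 (m n : nat) :
  gbinom (m + n)%N%:Z m * harmonic (n + m) =
  \sum_(0 <= k < n.+1)
     harmonic k * gbinom ((m + n)%N%:Z - k%:Z - 1) (n - k)
  + harmonic m * gbinom (n + m)%N%:Z n.
Proof.
have -> : \sum_(0 <= k < n.+1)
     harmonic k * gbinom ((m + n)%N%:Z - k%:Z - 1) (n - k) = S m n.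
  rewrite /S; apply: eq_big_nat => k /andP [_ hk].
  congr (_ * _).
  case: (ltnP k n) => hkn.
    have -> : ((m + n)%N%:Z - k%:Z - 1 = (m + n - k).-1%N%:Z)%R.
      have -> : (m + n - k).-1 = (m + n - k - 1)%N by lia.
      rewrite !subzn //; lia.
    by rewrite gbinom_nat.
  have -> : (n - k = 0)%N by lia.
  by rewrite gbinom0 bin0.
have := ST m n; rewrite /T => ->.
rewrite !gbinom_nat addnC -[in 'C(n + m, n)](bin_sub (leq_addr m n)).
have -> : (n + m - n = m)%N by lia.
ring.
Qed.
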